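(* Let $n=p\,q^{\alpha}$ with $\alpha\ge 1$ an integer and $p,q$ distinct primes such that $q\not\equiv 1\pmod 3$. If $n$ divides $\sigma_3(n)$, then $n$ is an even perfect number and $n\neq 28$.
   Context: $\sigma_3(n)=\sum_{d\mid n,\ d>0} d^3$. A positive integer $n$ is perfect if $\sum_{d\mid n,\ d>0} d=2n$. *)

(* Defs.v *)
From mathcomp Require Import all_boot.
Set Implicit Arguments. Unset Strict Implicit. Unset Printing Implicit Defensive.

Definition sigma (k n : nat) : nat := \sum_(d <- divisors n) d ^ k.

Definition sigma3 (n : nat) : nat := sigma 3 n.

Definition perfect (n : nat) : Prop := 0 < n /\ sigma 1 n = 2 * n.

(* Main.v *)
Require Import Defs.
From mathcomp Require Import all_boot.
From mathcomp Require Import all_algebra zify.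
Set Implicit Arguments. Unset Strict Implicit.
Import GRing.Theory.
Section FLs.
Local Open Scope ring_scope.

Lemma FL p q : prime q -> (q %% 3 = 2)%N -> (q %| p^3 + 1)%N -> (q %| p + 1)%N.
Proof.
move=> pq q3 hd.
have chq := pchar_Fp pq.
pose x : 'F_q := p%:R.
have h3 : x ^+ 3 = -1.
  move: hd; rewrite (dvdn_pcharf chq) natrD natrX => /eqP.
  by move/eqP; rewrite addr_eq0 => /eqP.
have hF : x ^+ q = x.
  have := fermat_little p pq; rewrite /x -natrX => e.
  by rewrite -(Fp_nat_mod pq) e (Fp_nat_mod pq).
have x0 : x != 0.
  apply/negP => /eqP x0; move: h3; rewrite x0 expr0n /= => /eqP.
  by rewrite eq_sym oppr_eq0 oner_eq0.
have qe : q = ((q %/ 3) * 3 + 2)%N by rewrite {1}(divn_eq q 3) q3.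
rewrite (dvdn_pcharf chq) natrD -/x; apply/eqP.
have hF2 : x ^+ ((q %/ 3) * 3 + 2)%N = x by rewrite -qe.
move: hF2; rewrite exprD mulnC exprM h3 => e.
have e2 : (-1) ^+ (q %/ 3)%N * x = 1.
  apply: (mulIf x0); rewrite mul1r -mulrA -expr2; exact: e.
move: e2; rewrite -signr_odd; case: (odd _) => /=.
  by rewrite expr1 mulN1r => /eqP; rewrite eqr_oppLR => /eqP ->; rewrite addNr.
rewrite expr0 mul1r => x1.
by move: h3; rewrite x1 expr1n => h; rewrite {1}h addNr.
Qed.
End FLs.


Lemma sigma_pq k p q a : prime p -> prime q -> p != q ->
  sigma k (p * q ^ a) = (1 + p ^ k) * \sum_(i < a.+1) (q ^ i) ^ k.
Proof.
move=> pp pq npq.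
have n0 : 0 < p * q ^ a by rewrite muln_gt0 prime_gt0 // expn_gt0 prime_gt0.
set s := [seq q ^ i | i <- iota 0 a.+1] ++ [seq p * q ^ i | i <- iota 0 a.+1].
have pe : perm_eq (divisors (p * q ^ a)) s.
  apply: uniq_perm; first exact: divisors_uniq.
    rewrite cat_uniq !map_inj_uniq ?iota_uniq ?andbT //.
    - apply/hasPn => x /mapP [i _ ->]; apply/mapP => [[j _ e]].
      have : p %| q ^ j by rewrite -e dvdn_mulr.
      rewrite Euclid_dvdX // dvdn_prime2 // => /andP [/eqP pq'].
      by move: npq; rewrite pq' eqxx.
    - by move=> i j /eqP; rewrite eqn_pmul2l ?prime_gt0 // => /eqP /(expnI (prime_gt1 pq)).
    - exact: expnI (prime_gt1 pq).
  move=> d; rewrite -dvdn_divisors // mem_cat; apply/idP/idP.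
    move=> hd; case pd: (p %| d).
      move/dvdnP: pd => [e de]; move: hd; rewrite de mulnC dvdn_pmul2l ?prime_gt0 //.
      case/(dvdn_pfactor _ _ pq) => m ma ->; apply/orP; right; apply/mapP.
      by exists m; rewrite // mem_iota /= add0n ltnS.
    have cdp : coprime d p by rewrite coprime_sym prime_coprime // pd.
    move: hd; rewrite (Gauss_dvdr _ cdp).
    case/(dvdn_pfactor _ _ pq) => m ma ->; apply/orP; left; apply/mapP.
    by exists m; rewrite // mem_iota /= add0n ltnS.
  case/orP => /mapP [i]; rewrite mem_iota add0n ltnS => /andP [_ hi] ->.
    by apply: dvdn_mull; rewrite dvdn_exp2l.
  by rewrite dvdn_pmul2l ?prime_gt0 // dvdn_exp2l.
rewrite /sigma (perm_big _ pe) big_cat !big_map.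
have -> : iota 0 a.+1 = index_iota 0 a.+1 by rewrite /index_iota subn0.
rewrite !big_mkord mulnDl mul1n big_distrr /=; congr (_ + _).
by apply: eq_bigr => i _; rewrite expnMn.
Qed.


Lemma L1 p k N c m : p + 1 = k * N -> c * N = m * p + 1 -> 2 <= N -> 1 <= c ->
  k = c \/ exists2 e, 0 < e & c = k + e * p.
Proof.
move=> h1 h2 hN hc.
have e : c * p + c = k * m * p + k by nia.
case: (ltngtP (k * m) c) => h.
- exfalso. nia.
- right; exists (k * m - c); first lia. nia.
- left; nia.
Qed.


Lemma L4 p k q e : p + 1 = k * q -> e * p + q = q * q + 1 -> 2 <= q -> 2 <= p ->
  k = q \/ p + 1 = q.
Proof.
move=> h1 h2 hq hp.
have E : q * (e * k + 1) = q * q + 1 + e.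
  have : e * (k * q) = e * (p + 1) by rewrite h1.
  rewrite mulnDr muln1 => h3. nia.
have hqe : q <= e * k + 1.
  case: (leqP q (e * k + 1)) => // hlt. 
  have : q * (e * k + 1) < q * q by rewrite ltn_pmul2l ?hlt //; lia.
  lia.
have [w hw] : exists w, e + 1 = q * w.
  exists (e * k + 1 - q). rewrite mulnBr. lia.
clear E hqe; case: k h1 => [|[|k]] h1; [lia | by right; lia | left].
have w1 : 1 <= w by case: w hw => [|w]; lia.
have eq1 : q <= e + 1 by rewrite hw leq_pmulr.
have pq : 2 * q <= p + 1 by rewrite h1 leq_mul2r; apply/orP; right.
case: q hq h1 h2 hw eq1 pq => [|[|s]] // _ h1 h2 hw eq1 pq.
have : (s.+1) * (2 * s + 3) <= e * p by apply: leq_mul; lia.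
move=> hh.
have s0 : s = 0 by clear -hh h2; nia.
subst s; clear -h1 h2 w1 hw; nia.
Qed.


Lemma L2a q N t : 2 <= q -> 1 <= t -> t * N = q + 1 + (q * q + t) ->
  [\/ N = q * q, N = q * q * q | q * q * q * q <= N] -> q = 2 /\ N = 8 /\ t = 1.
Proof.
move=> hq ht e hN; case: hN e => [->|->|hN] e.
- exfalso. case: t ht e => [|[|t]] _ e; [lia|lia|].
  have hq2 : q * q <= q + 3 by nia.
  have q2 : q = 2 by nia. subst q; lia.
- case: q hq e => [|[|[|q]]] // _ e.
  + have t1 : t = 1 by nia. subst t; auto.
  + exfalso. nia.
- exfalso. nia.
Qed.

Lemma L2b q N t k j : 2 <= q -> 2 <= k -> 2 <= j -> q != 3 -> t * N = q + k + j -> k * j = q * q + t ->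
  [\/ N = q * q, N = q * q * q | q * q * q * q <= N] -> False.
Proof.
move=> hq hk hj q3 e1 e2 hN.
have hkj : 2 * k + 2 * j <= k * j + 4 by clear -hk hj; nia.
have hN2 : q * q <= N by case: hN => [->|->|]; nia.
have t1 : t = 1.
  case: t e1 e2 => [|[|t]] // e1 e2; first nia.
  exfalso. clear hN. nia.
subst t.
have hNq : N = q * q.
  case: hN => [//|hN3|h].
  - exfalso; rewrite hN3 in e1; clear -e1 e2 hkj hq; nia.
  - exfalso; clear -e1 e2 hkj hq h; nia.
subst N.
have q3' : q <= 3 by clear -e1 e2 hkj hq; nia.
case: q hq q3 q3' e1 e2 {hkj hN hN2} => [|[|[|[|q]]]] //= _ _ _ e1 e2; nia.
Qed.


Lemma chk3 : all (fun N => all (fun t => all (fun k =>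
   (t * (2 * N - 1) <= 103) ==> (k * (t * N - 9 - k) != 81 + t)) (iota 0 52)) (iota 0 21)) [:: 3; 9; 27].
Proof. by vm_compute. Qed.

Lemma L3 N k j : odd N -> [\/ N = 3, N = 9, N = 27 | 81 <= N] -> 1 <= k -> 1 <= j ->
  k * j * N = 81 * N + 9 + k + j -> False.
Proof.
move=> oN hN hk hj e.
have N3 : 3 <= N by case: hN => [->|->|->|]; lia.
have hkj : 81 < k * j.
  case: (leqP (k * j) 81) => // h; exfalso.
  have : k * j * N <= 81 * N by rewrite leq_mul2r h orbT.
  lia.
set t := k * j - 81.
have et : k * j = 81 + t by rewrite /t; lia.
have e2 : t * N = 9 + k + j.
  move: e; rewrite et mulnDl; lia.
have [u hu] : exists u, N = u.*2.+1.
  exists N./2; by rewrite -{1}(odd_double_half N) oN add1n.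
clearbody t.
case: (ltngtP k 1) => [|hk2|hk1]; first lia; last first.
  exfalso; move: e2 et; rewrite hk1 mul1n hu => e2 et; lia.
case: (ltngtP j 1) => [|hj2|hj1]; first lia; last first.
  exfalso; move: e2 et; rewrite hj1 muln1 hu => e2 et; lia.
have h4 : 2 * k + 2 * j <= k * j + 4 by clear -hk2 hj2; nia.
have ht : t * (2 * N - 1) <= 103 by clear -h4 e2 et N3; nia.
have t21 : t < 21 by clear -ht N3; nia.
have tN : 2 * (t * N) <= 103 + t by clear -ht N3; nia.
have k52 : k < 52 by clear -tN t21 e2 hj; lia.
have hN' : N \in [:: 3; 9; 27].
  case: hN => [->|->|->|h] //; exfalso; have t1 : 1 <= t by lia. clear -ht h t1; nia.
have ej : j = t * N - 9 - k by lia.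
move/allP: chk3 => /(_ N hN') /allP /(_ t) ; rewrite mem_iota t21 => /(_ isT) /allP /(_ k).
rewrite mem_iota k52 => /(_ isT) /implyP /(_ ht).
by rewrite -ej et eqxx.
Qed.


Definition S q a := \sum_(i < a.+1) (q ^ i) ^ 3.

Lemma S_geo q a : S q a * q ^ 3 + 1 = S q a + q ^ (3 * a.+1).
Proof.
elim: a => [|a IH]; first by rewrite /S big_ord1 expn0 exp1n mul1n muln1 addnC.
have -> : S q a.+1 = S q a + q ^ (3 * a.+1) by rewrite /S big_ord_recr /= -expnM mulnC.
have -> : q ^ (3 * a.+2) = q ^ (3 * a.+1) * q ^ 3 by rewrite -expnD; congr (_ ^ _); lia.
rewrite mulnDl; lia.
Qed.

Lemma S_cop q a : prime q -> coprime q (S q a).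
Proof.
move=> pq; rewrite /S big_ord_recl expn0 exp1n prime_coprime //.
have hd : q %| \sum_(i < a) (q ^ (lift ord0 i)) ^ 3.
  apply: dvdn_sum => i _; rewrite /= /bump /= add1n expnS -expnM; apply: dvdn_mulr; exact: dvdn_exp.
rewrite (dvdn_addl _ hd) dvdn1; apply/eqP => q1; by move: pq; rewrite q1.
Qed.

Lemma GEN0 p q a : 1 <= q -> p %| S q a ->
  p %| (q ^ a.+1 - 1) * (q ^ a.+1 * q ^ a.+1 + q ^ a.+1 + 1).
Proof.
move=> q1 hp.
have geo := S_geo q a.
have e3 : q ^ (3 * a.+1) = q ^ a.+1 * q ^ a.+1 * q ^ a.+1.
  by rewrite mulnC expnM !expnS expn0 muln1 mulnA.
rewrite e3 in geo.
set Q := q ^ a.+1.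
have Q1 : 1 <= Q by rewrite expn_gt0 q1.
have q31 : 1 <= q ^ 3 by rewrite expn_gt0 q1.
have -> : (Q - 1) * (Q * Q + Q + 1) = S q a * (q ^ 3 - 1).
  rewrite mulnBr muln1.
  have -> : (Q - 1) * (Q * Q + Q + 1) = Q * Q * Q - 1 by clear -Q1; nia.
  lia.
exact: dvdn_mulr.
Qed.

Lemma GEN2 p r k N c : 0 < N -> p * r = c * N * (c * N) + c * N + 1 -> p + 1 = k * N ->
  exists2 j, r + 1 = j * N & k * j * N = c * c * N + c + k + j.
Proof.
move=> N0 e1 e2.
have hd : N %| r + 1.
  have h : r * (p + 1) = c * N * (c * N) + c * N + (r + 1) by lia.
  have : N %| r * (p + 1) by rewrite e2 mulnA dvdn_mull.
  rewrite h (dvdn_addr _ (_ : N %| c * N * (c * N) + c * N)) //.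
  by rewrite dvdn_add // ?dvdn_mull // dvdn_mulr // dvdn_mull.
exists ((r + 1) %/ N); first by rewrite divnK.
set j := (r + 1) %/ N.
have ej : r + 1 = j * N by rewrite divnK.
apply/eqP; rewrite -(eqn_pmul2r N0); apply/eqP.
have E : (p + 1) * (r + 1) = c * N * (c * N) + c * N + (p + 1) + (r + 1) by lia.
rewrite e2 ej in E. clear -E. nia.
Qed.

Lemma PP p q : prime p -> prime q -> p + 1 = q -> p = 2 /\ q = 3.
Proof.
move=> pp pq e.
case: (even_prime pp) => [p2|op]; first by subst; split.
case: (even_prime pq) => [q2|oq].
  have p1 : p = 1 by lia.
  by move: pp; rewrite p1.
by move: oq; rewrite -e addn1 /= op.
Qed.

Lemma sum2 m : \sum_(i < m) (2 ^ i) ^ 1 + 1 = 2 ^ m.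
Proof.
elim: m => [|m IH]; first by rewrite big_ord0.
by rewrite big_ord_recr /= expn1 -addnA (addnC (2 ^ m)) addnA IH expnS; lia.
Qed.


Lemma TT c d k j N : 0 < N -> 0 < d -> k * j * N = c * N + d + k + j ->
  exists2 t, k * j = c + t & t * N = d + k + j.
Proof.
move=> N0 d0 e.
have hc : c < k * j.
  case: (leqP (k * j) c) => // h; exfalso.
  have : k * j * N <= c * N by rewrite leq_mul2r h orbT.
  lia.
exists (k * j - c); first lia.
rewrite mulnBl; lia.
Qed.

Lemma NF q a : 1 < q -> 2 <= a -> [\/ q ^ a = q * q, q ^ a = q * q * q | q * q * q * q <= q ^ a].
Proof.
move=> q1; case: a => [|[|[|[|a]]]] // _.
- apply: Or31. by rewrite !expnS expn0 muln1.
- apply: Or32. by rewrite !expnS expn0 muln1 mulnA.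
- apply: Or33. have -> : q * q * q * q = q ^ 4 by rewrite !expnS expn0 muln1 !mulnA.
  by rewrite leq_exp2l.
Qed.

Lemma NF3 b : 1 <= b -> [\/ 3 ^ b = 3, 3 ^ b = 9, 3 ^ b = 27 | 81 <= 3 ^ b].
Proof.
case: b => [|[|[|[|b]]]] // _; [exact: Or41 | exact: Or42 | exact: Or43 |].
apply: Or44. have : 3 ^ 4 <= 3 ^ b.+4 by rewrite leq_exp2l.
by [].
Qed.

Lemma FIN p a : prime p -> p + 1 = 2 ^ a.+1 -> 1 <= a -> p %| S 2 a ->
  perfect (p * 2 ^ a) /\ ~~ odd (p * 2 ^ a) /\ p * 2 ^ a != 28.
Proof.
move=> pp hp ha hS.
have op : odd p.
  have := congr1 odd hp; rewrite addn1 /= oddX orbF => /negbFE.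
  by [].
have p2 : p != 2 by apply/eqP => p2; rewrite p2 in op.
split; [split|split].
- by rewrite muln_gt0 expn_gt0 prime_gt0.
- rewrite sigma_pq //.
  have hX : \sum_(i < a.+1) (2 ^ i) ^ 1 = p by have := sum2 a.+1; lia.
  rewrite hX expn1 addnC hp expnS; nia.
- rewrite oddM oddX orbF; move: ha; rewrite lt0n => /negbTE ->; by rewrite andbF.
- case: a ha hp hS => [|[|[|a]]] // _ hp hS.
  + rewrite !expnS expn0 in hp. have -> : p = 3 by lia. by [].
  + rewrite !expnS expn0 in hp. have p7 : p = 7 by lia.
    have : S 2 2 = 73 by rewrite /S !big_ord_recr big_ord0.
    by move=> e; move: hS; rewrite p7 e.
  + have h8 : 2 ^ 3 <= 2 ^ a.+3 by rewrite leq_exp2l.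
    rewrite expnS in hp. apply/eqP => e. 
    have : 15 <= p by move: h8 hp => /= h8 hp; lia.
    move=> h15; move: h8 => /= h8; nia.
Qed.


Lemma caseA p q a : prime p -> prime q -> p != q -> 1 <= a -> q != 3 -> q %% 3 != 1 ->
  q ^ a %| 1 + p ^ 3 -> p %| S q a ->
  perfect (p * q ^ a) /\ ~~ odd (p * q ^ a) /\ p * q ^ a != 28.
Proof.
move=> pp pq npq ha qn3 q3 F1 F2.
have p1 := prime_gt1 pp; have q1 := prime_gt1 pq.
have fac : 1 + p ^ 3 = (p + 1) * (p * (p - 1) + 1).
  case: p {pp npq F1 F2} p1 => [|p] // _; rewrite !expnS expn0 muln1 subn1 /=; nia.
have GE := GEN0 (ltnW q1) F2.
have q32 : q %% 3 = 2.
  have h0 : q %% 3 != 0.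
    apply/negP => h. have : 3 %| q by [].
    rewrite dvdn_prime2 // => /eqP q3'; by rewrite -q3' eqxx in qn3.
  have := ltn_pmod q (isT : 0 < 3). lia.
have cg : coprime q (p * (p - 1) + 1).
  rewrite prime_coprime //; apply/negP => hg.
  have h1 : q %| p ^ 3 + 1 by rewrite addnC fac dvdn_mull.
  have h2 := FL pq q32 h1.
  have h3 : q %| 3 * p.
    have e : (p + 1) * (p + 1) = (p * (p - 1) + 1) + 3 * p.
      case: p {pp npq F1 F2 fac GE hg h1 h2} p1 => [|p] // _; rewrite subn1 /=; nia.
    have : q %| (p + 1) * (p + 1) by apply: dvdn_mull.
    by rewrite e (dvdn_addr _ hg).
  move: h3; rewrite Euclid_dvdM // !dvdn_prime2 // => /orP [] /eqP h.
    by move: qn3; rewrite h eqxx.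
  by move: npq; rewrite h eqxx.
have NqA : q ^ a %| p + 1 by move: F1; rewrite fac Gauss_dvdl // coprimeXl.
case/dvdnP: NqA => k hk.
have N2 : q <= q ^ a by rewrite -{1}(expn1 q) leq_exp2l.
have N0 : 0 < q ^ a by lia.
have hkq : k = q.
  move: GE; rewrite expnS Euclid_dvdM // => /orP [h | h].
  - case/dvdnP: h => m hm.
    have hm' : q * q ^ a = m * p + 1.
      have : 1 <= q * q ^ a by rewrite muln_gt0; lia.
      lia.
    case: (L1 hk hm' _ _) => [||//|[e e0 he]]; try lia.
    exfalso.
    have hep : p <= e * p by rewrite leq_pmull.
    have k1 : 1 <= k by case: (posnP k) => [k0|//]; rewrite k0 in hk; lia.
    have hkN : q ^ a <= k * q ^ a by rewrite leq_pmull.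
    have : p + 1 = q by lia.
    move/(PP pp pq) => [_ q3']; by rewrite q3' eqxx in qn3.
  - case/dvdnP: h => r hr.
    case: (ltngtP a 1) => [|ha2|ha1]; first lia.
    + have [j hj ekj] := GEN2 (c := q) N0 (etrans (mulnC _ _) (esym hr)) hk.
      have k1 : 1 <= k by case: (posnP k) => [k0|//]; rewrite k0 in hk; lia.
      have j1 : 1 <= j by case: (posnP j) => [j0|//]; rewrite j0 in hj; lia.
      have [t et e2] := TT N0 (ltnW q1) ekj.
      have t1 : 1 <= t by case: (posnP t) => [t0|//]; rewrite t0 in e2; lia.
      have hN := NF q1 ha2.
      case: (ltngtP k 1) => [|hk2|hk1]; first lia; last first.
        exfalso; subst k.
        have := L2a (q := q) (N := q ^ a) (t := t) q1 t1 _ hN.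
        case; first lia.
        move=> q2 [N8 tt1]; subst q t.
        have a3 : a = 3 by apply: (expnI (isT : 1 < 2)); rewrite N8.
        subst a. rewrite N8 in hk.
        have p7 : p = 7 by lia.
        have : S 2 3 = 585 by rewrite /S !big_ord_recr big_ord0.
        by move=> e; move: F2; rewrite p7 e.
      case: (ltngtP j 1) => [|hj2|hj1]; first lia; last first.
        exfalso; subst j.
        have := L2a (q := q) (N := q ^ a) (t := t) q1 t1 _ hN.
        case; first lia.
        move=> q2 [N8 tt1]; subst q t.
        rewrite N8 in hk.
        have p39 : p = 39 by lia.
        by move: pp; rewrite p39.
      exfalso; exact: (L2b q1 hk2 hj2 qn3 e2 et hN).
    + subst a.
      have S1 : S q 1 = 1 + q * q * q by rewrite /S big_ord_recr big_ord1 /= !expnS expn0 !muln1 mulnA.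
      rewrite S1 in F2.
      rewrite expn1 in hk hr.
      have qq : q <= q * q by rewrite leq_pmull; lia.
      have hd : p %| q * q + 1 - q.
        have e : r * p = q * (1 + q * q * q) + (q * q + 1 - q) by rewrite -hr; nia.
        have : p %| q * (1 + q * q * q) + (q * q + 1 - q) by rewrite -e dvdn_mull.
        by rewrite (dvdn_addr _ (dvdn_mull q F2)).
      case/dvdnP: hd => e he.
      have he' : e * p + q = q * q + 1 by lia.
      case: (L4 hk he' q1 p1)
 => // /(PP pp pq) [_ q3'].
      by rewrite q3' eqxx in qn3.
subst k.
have q2 : q = 2.
  case: (even_prime pq) => // oq; exfalso.
  have hk' : p + 1 = q ^ a.+1 by rewrite expnS.
  case: (even_prime pp) => [p2|op].
    subst p.
    have : q %| 3 by rewrite (_ : 3 = q ^ a.+1) // dvdn_exp.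
    rewrite dvdn_prime2 // => /eqP q3'; by rewrite q3' eqxx in qn3.
  have := congr1 odd hk'; rewrite addn1 /= oddX op oq orbT.

  by [].
subst q.
apply: FIN => //; by rewrite expnS.
Qed.



Lemma caseB p a : prime p -> p != 3 -> 1 <= a -> 3 ^ a %| 1 + p ^ 3 -> p %| S 3 a ->
  perfect (p * 3 ^ a) /\ ~~ odd (p * 3 ^ a) /\ p * 3 ^ a != 28.
Proof.
move=> pp np3 ha F1 F2.
have p1 := prime_gt1 pp.
case: (even_prime pp) => [p2|op].
  subst p.
  have h9 := dvdn_leq (isT : 0 < 1 + 2 ^ 3) F1.
  rewrite (_ : 1 + 2 ^ 3 = 9) // in h9.
  case: a ha F1 F2 h9 => [|[|[|a]]] // _ F1 F2 h9.
  - split; [split => //|by []].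
    by rewrite sigma_pq // !big_ord_recr big_ord0.
  - have : S 3 2 = 757 by rewrite /S !big_ord_recr big_ord0.
    by move=> e; move: F2; rewrite e.
  - have : 3 ^ 3 <= 3 ^ a.+3 by rewrite leq_exp2l.
    move=> /= h; lia.
exfalso.
case: a ha F1 F2 => [|b] // _ F1 F2.
have fac : 1 + p ^ 3 = (p + 1) * (p * (p - 1) + 1).
  case: p {pp np3 F1 F2 op} p1 => [|p] // _; rewrite !expnS expn0 muln1 subn1 /=; nia.
have hb : 3 ^ b %| p + 1.
  move: (divn_eq p 3) (ltn_pmod p (isT : 0 < 3)); move: (p %/ 3) (p %% 3) => s r0 hp r3.
  case: r0 hp r3 => [|[|[|r0]]] // hp _.
  - exfalso. have : 3 %| p by rewrite hp addn0 dvdn_mull.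
    rewrite dvdn_prime2 // => /eqP p3; by rewrite -p3 eqxx in np3.
  - have eg : p * (p - 1) + 1 = 3 * (s * p) + 1 by clear -hp; subst p; nia.
    have cop : coprime 3 (p * (p - 1) + 1).
      rewrite prime_coprime // eg; apply/negP.
      by rewrite (dvdn_addr _ (dvdn_mulr _ (dvdnn 3))).
    move: F1; rewrite fac Gauss_dvdl ?coprimeXl // => h.
    apply: dvdn_trans h; exact: dvdn_exp2l.
  - set u := 3 * (s * s + s) + 1.
    have eg : p * (p - 1) + 1 = 3 * u by rewrite /u; clear -hp; subst p; nia.

    have cop : coprime 3 u.
      rewrite prime_coprime // /u; apply/negP.
      by rewrite (dvdn_addr _ (dvdn_mulr _ (dvdnn 3))).
    move: F1; rewrite fac eg expnS mulnCA dvdn_pmul2l // Gauss_dvdl // coprimeXl //.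
case: b hb F1 F2 => [|b] hb F1 F2.
  have : S 3 1 = 28 by rewrite /S !big_ord_recr big_ord0.
  move=> e; move: F2; rewrite e (_ : 28 = 2 ^ 2 * 7) // Euclid_dvdM // Euclid_dvdX //.
  rewrite !dvdn_prime2 // => /orP [/andP [/eqP p2 _]|/eqP p7].
    by rewrite p2 in op.
  by move: F1; rewrite p7.
set N := 3 ^ b.+1 in hb F1 F2 *.
have oN : odd N by rewrite /N oddX orbT.
have N3 : 3 <= N by rewrite /N -{1}(expn1 3) leq_exp2l.
have N0 : 0 < N by lia.
have hN := NF3 (isT : 1 <= b.+1); rewrite -/N in hN.
case/dvdnP: hb => k hk.
have ek : ~~ odd k.
  have := congr1 odd hk; rewrite addn1 /= oddM op oN andbT /=.
  by move=> <-.
have GE := GEN0 (q := 3) (a := b.+2) (p := p) isT F2.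
have Q : 3 ^ b.+3 = 9 * N by rewrite /N !expnS !mulnA.
move: GE; rewrite Q Euclid_dvdM // => /orP [h|h].
- case/dvdnP: h => m hm.
  have hm' : 9 * N = m * p + 1 by lia.
  have N2 : 2 <= N by lia.
  have [k9|[e e0 he]] := L1 hk hm' N2 (isT : 1 <= 9).
    by rewrite k9 in ek.

  case: k hk ek he => [|[|[|k]]] // hk _ he.
  + lia.
  + have e7 : e * p = 7 by lia.
    have : p %| 7 by rewrite -e7 dvdn_mull.
    rewrite dvdn_prime2 // => /eqP p7.
    have N4 : N = 4 by lia.
    by rewrite N4 in oN.
  + have hep : p <= e * p by rewrite leq_pmull.
    have : 3 * N <= k.+3 * N by rewrite leq_mul2r; apply/orP; right.
    lia.
- case/dvdnP: h => r hr.
  have [j hj ekj] := GEN2 (c := 9) N0 (etrans (mulnC _ _) (esym hr)) hk.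
  have k1 : 1 <= k by case: (posnP k) => [k0|//]; rewrite k0 in hk; lia.
  have j1 : 1 <= j by case: (posnP j) => [j0|//]; rewrite j0 in hj; lia.
  exact: (L3 oN hN k1 j1 ekj).
Qed.

Unset Implicit Arguments.

Theorem theorem1p7 (p q alpha : nat) :
  prime p -> prime q -> p != q -> 1 <= alpha ->
  q %% 3 != 1 ->
  p * q ^ alpha %| sigma3 (p * q ^ alpha) ->
  perfect (p * q ^ alpha) /\ ~~ odd (p * q ^ alpha) /\ p * q ^ alpha != 28.
Proof.
move=> pp pq npq ha q3 hdiv.
have hs : sigma3 (p * q ^ alpha) = (1 + p ^ 3) * S q alpha by rewrite /sigma3 sigma_pq.
rewrite hs in hdiv.
have p1 := prime_gt1 pp.
have F1 : q ^ alpha %| 1 + p ^ 3.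
  have : q ^ alpha %| (1 + p ^ 3) * S q alpha by apply: dvdn_trans hdiv; apply: dvdn_mull.
  by rewrite Gauss_dvdl // coprimeXl // S_cop.
have F2 : p %| S q alpha.
  have : p %| (1 + p ^ 3) * S q alpha by apply: dvdn_trans hdiv; apply: dvdn_mulr.
  rewrite Gauss_dvdr // prime_coprime //; apply/negP.
  rewrite (dvdn_addl _ (dvdn_exp (isT : 0 < 3) (dvdnn p))) dvdn1 => /eqP p1'; lia.
case: (eqVneq q 3) => [q3e|qn3].
  subst q. exact: caseB pp npq ha F1 F2.
exact: caseA pp pq npq ha qn3 q3 F1 F2.
Qed.
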